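(* Let $n\ge 1$ and let $a_i=F_{i+2}-i-2$ for $i\ge 1$. Every game path of the Zeckendorf game on $n$ (starting from $\{F_1^n\}$) has length at most $\sum_{i=1}^{i_{\max}(n)} a_i\,\delta_i$, and $$\sum_{i=1}^{i_{\max}(n)} a_i\,\delta_i\ \le\ \frac{3+\sqrt5}{2}\,n-IZ(n)-\frac{1+\sqrt5}{2}\,Z(n).$$
   Context: Fibonacci numbers are indexed by $F_1=1$, $F_2=2$, $F_{i+1}=F_i+F_{i-1}$. A game state is a finite multiset of Fibonacci numbers (tracked by index); $\{F_1^n\}$ denotes $n$ copies of $F_1$. The legal moves are: $C_1$: replace $F_1,F_1$ by $F_2$; for $i\ge 2$, $C_i$: replace $F_{i-1},F_i$ by $F_{i+1}$; $S_2$: replace $F_2,F_2$ by $F_1,F_3$; for $i\ge 3$, $S_i$: replace $F_i,F_i$ by $F_{i-2},F_{i+1}$. The game on $n$ starts at $\{F_1^n\}$ and a game path is a sequence of legal moves continued until no legal move is available, which happens exactly at the Zeckendorf decomposition of $n$ (the unique representation of $n$ as a sum of $F_i$'s with distinct, pairwise non-consecutive indices); the length of a path is its number of moves. Write the Zeckendorf decomposition as $n=\sum_{i=1}^{i_{\max}(n)}\delta_i F_i$ with $\delta_i\in\{0,1\}$ and $i_{\max}(n)$ the largest index occurring; $Z(n)=\sum_i\delta_i$ and $IZ(n)=\sum_i i\,\delta_i$. *)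

(* Defs.v *)
From mathcomp Require Import all_boot all_order all_algebra.
From mathcomp Require Import all_reals.
Set Implicit Arguments. Unset Strict Implicit. Unset Printing Implicit Defensive.

(* Fibonacci numbers with F 1 = 1, F 2 = 2, F (i+1) = F i + F (i-1);
   F 0 := 1 is an auxiliary value making the recursion start correctly. *)
Fixpoint F (i : nat) : nat :=
  match i with
  | 0 => 1
  | 1 => 1
  | (j.+1) as k => match j with 0 => 2 | j'.+1 => F j + F j' end
  end.

(* A game state: multiset of Fibonacci numbers, tracked by index;
   s i = number of copies of F_i (index 0 unused). *)
Definition state := nat -> nat.

Definition start (n : nat) : state := fun j => if j == 1 then n else 0.

Definition move (s t : state) : Prop :=
  (* C_1 : F_1,F_1 -> F_2 *)
  (2 <= s 1 /\ forall j, t j =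
      if j == 1 then s j - 2 else if j == 2 then s j + 1 else s j)
  \/
  (* C_i, i >= 2 : F_{i-1},F_i -> F_{i+1} *)
  (exists i, 2 <= i /\ 1 <= s i.-1 /\ 1 <= s i /\ forall j, t j =
      if j == i.-1 then s j - 1 else if j == i then s j - 1
      else if j == i.+1 then s j + 1 else s j)
  \/
  (* S_2 : F_2,F_2 -> F_1,F_3 *)
  (2 <= s 2 /\ forall j, t j =
      if j == 2 then s j - 2 else if j == 1 then s j + 1
      else if j == 3 then s j + 1 else s j)
  \/
  (* S_i, i >= 3 : F_i,F_i -> F_{i-2},F_{i+1} *)
  (exists i, 3 <= i /\ 2 <= s i /\ forall j, t j =
      if j == i then s j - 2 else if j == i.-2 then s j + 1
      else if j == i.+1 then s j + 1 else s j).

Fixpoint is_path (s : state) (p : seq state) : Prop :=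
  match p with
  | [::] => True
  | t :: p' => move s t /\ is_path t p'
  end.

Definition game_path (n : nat) (p : seq state) : Prop :=
  is_path (start n) p /\ forall t, ~ move (last (start n) p) t.

Definition is_zeck (K : nat) (d : nat -> bool) (n : nat) : Prop :=
  (forall i, d i -> 1 <= i < K) /\
  (forall i, d i -> ~~ d i.+1) /\
  \sum_(1 <= i < K) d i * F i = n.

Definition a (i : nat) : nat := F i.+2 - i - 2.

(* Main.v *)
Require Import Defs.
From mathcomp Require Import all_boot all_order all_algebra all_reals.
From mathcomp Require Import zify ring lra.
Import Order.TTheory GRing.Theory Num.Theory.

Lemma Frec i : F i.+2 = F i.+1 + F i. Proof. by []. Qed.

Lemma Fbound j : 0 < F j /\ j <= F j.
Proof.
suff H : (0 < F j /\ j <= F j) /\ (0 < F j.+1 /\ j.+1 <= F j.+1) by case: H.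
elim: j => [|j [H1 H2]]; first by [].
split=> //; rewrite Frec; lia.
Qed.

Lemma sum_ind (w : nat -> nat) N x : x < N ->
  \sum_(0 <= j < N) (x == j) * w j = w x.
Proof.
elim: N => [//|N IH] H; rewrite big_nat_recr //=.
case: (ltngtP x N) => Hx.
- by rewrite IH // mul0n addn0.
- lia.
- subst; rewrite mul1n big1_seq ?add0n // => j /andP[_].
  rewrite mem_index_iota => /andP[_ Hj].
  by rewrite (gtn_eqF Hj).
Qed.

Lemma sum_count (w : nat -> nat) N l : (forall k, k \in l -> k < N) ->
  \sum_(0 <= j < N) count_mem j l * w j = \sum_(k <- l) w k.
Proof.
elim: l => [|x l IH] H.
  by rewrite big_nil big1.
rewrite big_cons -IH; last by move=> k Hk; apply: H; rewrite inE Hk orbT.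
rewrite -(@sum_ind w N); last by apply: H; rewrite inE eqxx.
rewrite -big_split /=; apply: eq_bigr => j _; by rewrite mulnDl.
Qed.

Lemma sum_ext0 (f : nat -> nat) N1 N2 : N1 <= N2 ->
  (forall j, N1 <= j -> f j = 0) ->
  \sum_(0 <= j < N1) f j = \sum_(0 <= j < N2) f j.
Proof.
move=> HN Hf; rewrite (@big_cat_nat _ _ _ N1 0 N2 _ _ (leq0n N1) HN) /=.
rewrite [X in _ = _ + X]big1_seq ?addn0 // => j /andP[_].
by rewrite mem_index_iota => /andP[Hj _]; exact: Hf.
Qed.

Lemma sum_drop0 (f : nat -> nat) K : f 0 = 0 ->
  \sum_(1 <= j < K) f j = \sum_(0 <= j < K) f j.
Proof.
move=> H; case: K => [|K]; first by rewrite !big_geq.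
by by rewrite (@big_ltn _ _ _ 0 K.+1) // H add0n.
Qed.

Lemma sum_recr (f : nat -> nat) n :
  \sum_(0 <= j < n.+1) f j = \sum_(0 <= j < n) f j + f n.
Proof. by rewrite big_nat_recr. Qed.

Definition valid (b : nat -> nat) :=
  b 0 = 0 /\ (forall j, b j <= 1) /\ (forall j, 0 < b j -> b j.+1 = 0).

Lemma zeck_lt m b : valid b -> \sum_(0 <= j < m.+1) b j * F j < F m.+1.
Proof.
move=> [H0 [H1 H2]].
elim: m {-2}m (leqnn m) => [|m IH] k Hk.
  have -> : k = 0 by lia.
  by rewrite big_nat1 H0.
case: k Hk => [|[|k]] Hk.
- by rewrite big_nat1 H0.
- rewrite big_nat_recr // big_nat1 H0 /=; rewrite mul0n add0n muln1; exact: leq_ltn_trans (H1 1) _.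
- rewrite sum_recr.
  have HF2 := Frec k.+1; have HF1 := Frec k.
  have := H1 k.+2; have := H2 k.+1.
  case: (b k.+2) => [|[|//]] H _.
  + have := IH k.+1 ltac:(lia); lia.
  + have Hb1 : b k.+1 = 0 by case: (b k.+1) H => // n' /(_ isT).
    rewrite sum_recr Hb1.
    have := IH k ltac:(lia); lia.
Qed.

Lemma zeck_uniq b b' N : valid b -> valid b' ->
  \sum_(0 <= j < N) b j * F j = \sum_(0 <= j < N) b' j * F j ->
  forall j, j < N -> b j = b' j.
Proof.
move=> Vb Vb'; elim: N => [//|N IH]; rewrite !big_nat_recr //= => Hs j Hj.
have Hb := Vb.2.1 N; have Hb' := Vb'.2.1 N.
have [HN|HN] : b N = b' N \/ b N <> b' N by lia.
- rewrite HN in Hs; have Hs' : \sum_(0 <= j < N) b j * F j = \sum_(0 <= j < N) b' j * F j by lia.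
  case: (ltngtP j N) => Hj'. by apply: IH. lia. by subst.
- exfalso; clear IH.
  wlog : b b' Vb Vb' Hs Hb Hb' HN / b N = 1 /\ b' N = 0.
    move=> W; have [E|E] : (b N = 1 /\ b' N = 0) \/ (b' N = 1 /\ b N = 0) by lia.
    by apply: (W b b'). by apply: (W b' b) => //; lia.
  case=> E1 E2; rewrite E1 E2 in Hs.
  case: N Hs Hj E1 {Hb Hb' HN E2} => [|m] Hs _ E1.
    by rewrite Vb.1 in E1.
  have := zeck_lt m b' Vb'; lia.
Qed.

Ltac eqs := repeat (case: eqP => ? /=; try subst; rewrite ?eqxx /=); lia.

Lemma move_dec s t : move s t -> exists rl cl : seq nat,
 (forall j, t j + count_mem j rl = s j + count_mem j cl) /\
 (forall k, k \in rl -> 0 < k /\ 0 < s k) /\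
 (forall k, k \in cl -> 0 < k /\ exists2 k', k' \in rl & k <= k'.+1) /\
 \sum_(k <- cl) F k = \sum_(k <- rl) F k /\
 (\sum_(k <- rl) a k).+1 <= \sum_(k <- cl) a k.
Proof.
case=> [[H1 Ht]|[[i [Hi [H1 [H2 Ht]]]]|[[H1 Ht]|[i [Hi [H1 Ht]]]]]].
- exists [::1;1], [::2]; split; [|split; [|split; [|split]]].
  + move=> j; rewrite Ht /=; eqs.
  + move=> k; rewrite !inE orbb => /eqP ->; lia.
  + move=> k; rewrite !inE => /eqP ->; split=> //; by exists 1; rewrite ?inE ?eqxx.
  + by rewrite !big_cons !big_nil.
  + by rewrite !big_cons !big_nil.
- case: i Hi H1 H2 Ht => [//|i] Hi H1 H2 Ht; simpl in H1, Ht.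
  exists [::i;i.+1], [::i.+2]; split; [|split; [|split; [|split]]].
  + move=> j; rewrite Ht /=; eqs.
  + move=> k; rewrite !inE => /orP[] /eqP ->; lia.
  + move=> k; rewrite !inE => /eqP ->; split=> //; by exists i.+1; rewrite ?inE ?eqxx ?orbT.
  + by rewrite !big_cons !big_nil !addn0 Frec addnC.
  + rewrite !big_cons !big_nil /a !addn0.
    have := Frec i.+2; have := Frec i.+3; have := Frec i.+1; have := Fbound i.+2; lia.
- exists [::2;2], [::1;3]; split; [|split; [|split; [|split]]].
  + move=> j; rewrite Ht /=; eqs.
  + move=> k; rewrite !inE orbb => /eqP ->; lia.
  + move=> k; rewrite !inE => /orP[] /eqP ->; split=> //; by exists 2; rewrite ?inE ?eqxx.
  + by rewrite !big_cons !big_nil.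
  + by rewrite !big_cons !big_nil.
- case: i Hi H1 Ht => [//|[//|i]] Hi H1 Ht; simpl in Ht.
  exists [::i.+2;i.+2], [::i; i.+3]; split; [|split; [|split; [|split]]].
  + move=> j; rewrite Ht /=; eqs.
  + move=> k; rewrite !inE orbb => /eqP ->; lia.
  + move=> k; rewrite !inE => /orP[] /eqP ->; (split; [lia|]); (exists i.+2; [by rewrite inE eqxx | lia]).
  + rewrite !big_cons !big_nil !addn0.
    have := Frec i.+1; have := Frec i; lia.
  + rewrite !big_cons !big_nil /a !addn0.
    have := Frec i.+2; have := Frec i.+3; have := Frec i.+1; have := Frec i.+4;
    have := Fbound i.+2; have := Fbound i.+3; have := Fbound i.+4; lia.
Qed.

Definition Inv n (s : state) := s 0 = 0 /\ (forall j, n < j -> s j = 0) /\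
  \sum_(0 <= j < n.+2) s j * F j = n.
Definition Phi n (s : state) := \sum_(0 <= j < n.+2) s j * a j.

Lemma cnt0 x (l : seq nat) : x \notin l -> count_mem x l = 0.
Proof. by move=> H; apply/count_memPn. Qed.

Lemma step n s t : Inv n s -> move s t -> Inv n t /\ (Phi n s).+1 <= Phi n t.
Proof.
move=> [Hs0 [Hsn HsF]] /move_dec [rl [cl [Heq [Hrl [Hcl [HF Ha]]]]]].
have Hrl' : forall k, k \in rl -> k < n.+2.
  move=> k /Hrl [Hk1 Hk2]; case: (leqP k n) => Hk; first lia.
  by rewrite Hsn in Hk2.
have Hcl' : forall k, k \in cl -> k < n.+2.
  move=> k /Hcl [_ [k' /Hrl [Hk1 Hk2] Hk]]; case: (leqP k' n) => Hk'; first lia.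
  by rewrite Hsn in Hk2.
have key : forall w, \sum_(0 <= j < n.+2) t j * w j + \sum_(k <- rl) w k =
   \sum_(0 <= j < n.+2) s j * w j + \sum_(k <- cl) w k.
  move=> w; rewrite -(sum_count w _ _ Hrl') -(sum_count w _ _ Hcl') -!big_split.
  by apply: eq_bigr => j _ /=; rewrite -!mulnDl Heq.
have HtF : \sum_(0 <= j < n.+2) t j * F j = n.
  have := key F; rewrite HF HsF; lia.
split; last by have := key a; rewrite /Phi; lia.
split; [|split] => //.
- have := Heq 0; rewrite Hs0 (@cnt0 0 cl); last by apply/negP => /Hcl [].
  lia.
- move=> j Hj; case: (ltngtP j n.+1) => Hj'; first lia.
  + have := Heq j; rewrite Hsn ?(@cnt0 j cl); [lia| |lia].
    by apply/negP => /Hcl' Hk; lia.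
  + subst j; move: HtF; rewrite sum_recr; have [_ Hb] := Fbound n.+1.
    case: (t n.+1) => [//|m]; rewrite mulSn; lia.
Qed.

Lemma path_ind n p s : Inv n s -> is_path s p ->
  Inv n (last s p) /\ Phi n s + size p <= Phi n (last s p).
Proof.
elim: p s => [|t p IH] s Hs /=; first by rewrite addn0.
move=> [Hm Hp]; have [Ht Hst] := step n s t Hs Hm.
have [H1 H2] := IH t Ht Hp; split=> //; lia.
Qed.

Lemma terminal n s : Inv n s -> (forall t, ~ move s t) -> valid s.
Proof.
move=> [Hs0 _] Hnm; split; [done|split].
- move=> j; case: (leqP (s j) 1) => // Hj; exfalso.
  case: j Hj => [|[|[|j]]] Hj.
  + by rewrite Hs0 in Hj.
  + apply: (Hnm (fun j => if j == 1 then s j - 2 else if j == 2 then s j + 1 else s j)).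
    by left.
  + apply: (Hnm (fun j => if j == 2 then s j - 2 else if j == 1 then s j + 1
      else if j == 3 then s j + 1 else s j)).
    by right; right; left.
  + apply: (Hnm (fun i => if i == j.+3 then s i - 2 else if i == j.+3.-2 then s i + 1
      else if i == j.+4 then s i + 1 else s i)).
    by right; right; right; exists j.+3.
- move=> j Hj; case: (leqP (s j.+1) 0) => H; first lia; exfalso.
  case: j Hj H => [|j] Hj H; first by rewrite Hs0 in Hj.
  apply: (Hnm (fun i => if i == j.+1 then s i - 1 else if i == j.+2 then s i - 1
      else if i == j.+3 then s i + 1 else s i)).
  by right; left; exists j.+2.
Qed.

Local Open Scope ring_scope.

Section R.
Variable R : realType.
Variable x : R.
Hypothesis x2 : x * x = 5.
Hypothesis x0 : 0 <= x.

Definition e (i : nat) : R := (F i.+1)%:R - (1 + x) / 2 * (F i)%:R.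

Lemma e_rec i : e i.+1 = - ((x - 1) / 2) * e i.
Proof.
rewrite /e Frec natrD; apply/eqP; rewrite -subr_eq0; apply/eqP.
transitivity ((F i)%:R * (5 - x * x) / 4); first by field.
by rewrite x2 subrr mulr0 mul0r.
Qed.

Lemma e_bnd i : (0 < i)%N -> - ((3 - x) / 2) <= e i <= (3 - x) / 2.
Proof.
have h0 := x0; have h2 := x2.
have hx3 : x <= 3 by nra.
have hx1 : 1 <= x by nra.
elim: i => [//|[|i] IH] _.
  rewrite /e (_ : F 2 = 2) // (_ : F 1 = 1) //; apply/andP; split; lra.
have /andP[IH1 IH2] := IH isT.
rewrite e_rec; set c := (x - 1) / 2.
have hc0 : 0 <= c by rewrite /c; lra.
have hc1 : c <= 1 by rewrite /c; lra.
apply/andP; split; nra.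
Qed.

Lemma F_bound i : (0 < i)%N -> (F i.+2)%:R - (3 + x) / 2 * (F i)%:R <= (3 - x) / 2.
Proof.
move=> Hi; have /andP[_ H] := e_bnd i Hi.
suff -> : (F i.+2)%:R - (3 + x) / 2 * (F i)%:R = e i by [].
by rewrite /e Frec natrD; field.
Qed.
End R.

Theorem theorem1p2 (R : realType) (n : nat) (K : nat) (d : nat -> bool)
    (p : seq state) :
  (1 <= n)%N -> is_zeck K d n -> game_path n p ->
  (size p <= \sum_(1 <= i < K) a i * d i)%N /\
  ((\sum_(1 <= i < K) a i * d i)%N%:R : R) <=
    (3 + Num.sqrt 5) / 2 * n%:R
    - (\sum_(1 <= i < K) i * d i)%N%:R
    - (1 + Num.sqrt 5) / 2 * (\sum_(1 <= i < K) (d i : nat))%N%:R.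
Proof.
move=> Hn [Hd1 [Hd2 Hdn]] [Hpath Hterm].
have Hd0 : d 0 = false by case E: (d 0) => //; have := Hd1 0 E.
have HdK : forall j, (K <= j)%N -> d j = false.
  move=> j Hj; case E: (d j) => //; have := Hd1 j E; lia.
split.
- have Hs : Inv n (start n).
    split; [done|split].
    + by move=> j Hj; rewrite /start; case: eqP => // E; lia.
    + have := @sum_ind (fun j => n * F j) n.+2 1 isT.
      move=> H; transitivity ((fun j => n * F j) 1)%N; last by rewrite /= muln1.
      apply: (etrans _ H).
      apply: eq_bigr => j _; rewrite /start eq_sym; case: eqP => [<-|_] //=; by rewrite mul1n.
  have [HI Hphi] := path_ind n p (start n) Hs Hpath.
  have Phi0 : Phi n (start n) = 0%N.
    rewrite /Phi big1 // => j _; rewrite /start; case: eqP => [->|_] //; by rewrite muln0.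
  rewrite Phi0 add0n in Hphi.
  set s := last (start n) p in HI Hphi Hterm.
  have Vs := terminal n s HI Hterm.
  have Vd : valid (fun j => nat_of_bool (d j)).
    split; [by rewrite Hd0|split]; first by move=> j; case: (d j).
    by move=> j; case E: (d j) => // _; rewrite (negbTE (Hd2 j E)).
  have [_ [Hsn HsF]] := HI.
  pose M := (K + n.+2)%N.
  have Hsn' : forall j, (n.+2 <= j)%N -> s j = 0%N by move=> j Hj; apply: Hsn; lia.
  have Heq : forall j, (j < M)%N -> s j = d j.
    apply: (zeck_uniq _ _ M Vs Vd).
    rewrite -(@sum_ext0 _ n.+2 M) ?HsF; last first.
      by move=> j Hj; rewrite Hsn'.
      rewrite /M; lia.
    rewrite -(@sum_ext0 _ K M); last first.
      by move=> j Hj; rewrite HdK.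
      rewrite /M; lia.
    by rewrite -sum_drop0 ?Hd0.
  apply: (leq_trans Hphi).
  rewrite /Phi (@sum_ext0 _ n.+2 M); last first.
    by move=> j Hj; rewrite Hsn'.
    rewrite /M; lia.
  rewrite big_nat_cond (eq_bigr (fun j => d j * a j)%N); last first.
    by move=> j /andP[/andP[_ Hj] _]; rewrite Heq.
  rewrite -big_nat_cond -(@sum_ext0 _ K M); last first.
    by move=> j Hj; rewrite HdK.
    rewrite /M; lia.
  rewrite -sum_drop0 ?Hd0 //.
  by apply: eq_leq; apply: eq_bigr => j _; rewrite mulnC.
- set x : R := Num.sqrt 5.
  have x2 : x * x = 5 by rewrite /x -expr2 sqr_sqrtr // ler0n.
  have x0 : 0 <= x by exact: sqrtr_ge0.
  rewrite -Hdn !natr_sum !mulr_sumr -!sumrB.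
  apply: ler_sum => i _.
  case E: (d i); last by rewrite /= !muln0 !mul0n !mulr0 !subr0.
  have Hi := Hd1 i E.
  have HB := F_bound R x x2 x0 i ltac:(lia).
  have [_ HF] := Fbound i.+2.
  rewrite (_ : nat_of_bool true = 1%N) // !muln1 mul1n /a natrB; last lia.
  rewrite natrB; last lia.
  lra.
Qed.
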